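(* Let $J$ be a cone with joins and $A,\tilde A\subset J\times J$ be such that $v\le w$ for every $(v,w)\in A$, and $v+\tilde v\le w+\tilde w$ for every $(v,w)\in A$ and $(\tilde v,\tilde w)\in\tilde A$. Then $x:=\inf_{(v,w)\in A}(w-v)$ satisfies $v+x\le w$ and $\tilde v\le\tilde w+x$ for all $(v,w)\in A$, $(\tilde v,\tilde w)\in\tilde A$.
   Context: A prewedge is a set $W$ with a commutative associative addition with neutral element $0$ and a multiplication $[0,\infty)\times W\to W$ such that $\lambda(\eta v)=(\lambda\eta)v$, $0v=0$, $1v=v$, $(\lambda+\eta)v=\lambda v+\eta v$, $\lambda(v+w)=\lambda v+\lambda w$; it carries the preorder $v\le w$ iff $v+z=w$ for some $z$. A wedge is a prewedge in which $\le$ is antisymmetric and $v=\sup_{\eta<1}\eta v$ for every $v$. A cone is a wedge in which every directed subset has a supremum. A cone with joins is a cone $J$ in which every subset $A$ has an infimum and $\inf(v+A)=v+\inf A$ for all $v\in J$, $A\subset J$. For $v\le w$ in a cone with joins, $w-v:=\max\{z\in J: v+z=w\}$ (this maximum exists). The infimum of the empty family is the maximum $\infty$ of $J$. *)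

(* Defs.v *)
(* scalars are Stdlib reals, restricted to [0, oo) in the axioms. *)
From Stdlib Require Import Reals ClassicalEpsilon.
Open Scope R_scope.

Record PW := {
  carrier :> Type;
  pw_add : carrier -> carrier -> carrier;
  pw_zero : carrier;
  pw_smul : R -> carrier -> carrier }.

Section Cones.
Variable W : PW.
Local Notation "a '+w' b" := (pw_add W a b) (at level 50, left associativity).
Local Notation "l '*w' v" := (pw_smul W l v) (at level 40).

Definition is_prewedge : Prop :=
  (forall v w : W, v +w w = w +w v) /\
  (forall u v w : W, u +w (v +w w) = (u +w v) +w w) /\
  (forall v : W, v +w pw_zero W = v) /\
  (forall (l e : R) (v : W), 0 <= l -> 0 <= e -> l *w (e *w v) = (l * e) *w v) /\
  (forall v : W, 0 *w v = pw_zero W) /\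
  (forall v : W, 1 *w v = v) /\
  (forall (l e : R) (v : W), 0 <= l -> 0 <= e -> (l + e) *w v = l *w v +w e *w v) /\
  (forall (l : R) (v w : W), 0 <= l -> l *w (v +w w) = l *w v +w l *w w).

Definition pw_le (v w : W) : Prop := exists z : W, v +w z = w.

Definition is_upper (S : W -> Prop) (x : W) := forall s, S s -> pw_le s x.
Definition is_lower (S : W -> Prop) (x : W) := forall s, S s -> pw_le x s.
Definition is_sup (S : W -> Prop) (x : W) :=
  is_upper S x /\ forall y, is_upper S y -> pw_le x y.
Definition is_inf (S : W -> Prop) (x : W) :=
  is_lower S x /\ forall y, is_lower S y -> pw_le y x.
Definition is_max (S : W -> Prop) (x : W) := S x /\ is_upper S x.

Definition is_wedge : Prop :=
  is_prewedge /\
  (forall v w : W, pw_le v w -> pw_le w v -> v = w) /\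
  (forall v : W, is_sup (fun u => exists e, 0 <= e < 1 /\ u = e *w v) v).

Definition directed (D : W -> Prop) : Prop :=
  (exists d, D d) /\
  forall a b, D a -> D b -> exists c, D c /\ pw_le a c /\ pw_le b c.

Definition is_cone : Prop :=
  is_wedge /\ forall D, directed D -> exists x, is_sup D x.

Definition translate (v : W) (S : W -> Prop) : W -> Prop :=
  fun u => exists a, S a /\ u = v +w a.

Definition is_cone_with_joins : Prop :=
  is_cone /\
  (forall S : W -> Prop, exists x, is_inf S x) /\
  (forall (v : W) (S : W -> Prop) (x : W), is_inf S x -> is_inf (translate v S) (v +w x)).

(* The infimum of S (unique in a wedge, by antisymmetry). *)
Definition inf (S : W -> Prop) : W :=
  epsilon (inhabits (pw_zero W)) (is_inf S).

Definition pw_sub (w v : W) : W :=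
  epsilon (inhabits (pw_zero W)) (is_max (fun z => v +w z = w)).

End Cones.

(* Main.v *)
Require Import Defs.
From Stdlib Require Import Reals Lra ClassicalEpsilon.
Open Scope R_scope.

Local Notation "a '+w' b" := (pw_add _ a b) (at level 50, left associativity).
Local Notation "l '*w' v" := (pw_smul _ l v) (at level 40).

Lemma addC J (HJ : is_cone_with_joins J) (a b : J) : a +w b = b +w a.
Proof. destruct HJ as [[[[H _] _] _] _]. apply H. Qed.
Lemma addA J (HJ : is_cone_with_joins J) (a b c : J) : a +w (b +w c) = (a +w b) +w c.
Proof. destruct HJ as [[[[_ [H _]] _] _] _]. apply H. Qed.
Lemma add0 J (HJ : is_cone_with_joins J) (a : J) : a +w pw_zero J = a.
Proof. destruct HJ as [[[[_ [_ [H _]]] _] _] _]. apply H. Qed.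
Lemma smM J (HJ : is_cone_with_joins J) l e (v : J) : 0 <= l -> 0 <= e -> l *w (e *w v) = (l * e) *w v.
Proof. destruct HJ as [[[[_ [_ [_ [H _]]]] _] _] _]. apply H. Qed.
Lemma sm0 J (HJ : is_cone_with_joins J) (v : J) : 0 *w v = pw_zero J.
Proof. destruct HJ as [[[[_ [_ [_ [_ [H _]]]]] _] _] _]. apply H. Qed.
Lemma sm1 J (HJ : is_cone_with_joins J) (v : J) : 1 *w v = v.
Proof. destruct HJ as [[[[_ [_ [_ [_ [_ [H _]]]]]] _] _] _]. apply H. Qed.
Lemma smD J (HJ : is_cone_with_joins J) l e (v : J) : 0 <= l -> 0 <= e -> (l + e) *w v = l *w v +w e *w v.
Proof. destruct HJ as [[[[_ [_ [_ [_ [_ [_ [H _]]]]]]] _] _] _]. apply H. Qed.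
Lemma smDr J (HJ : is_cone_with_joins J) l (v w : J) : 0 <= l -> l *w (v +w w) = l *w v +w l *w w.
Proof. destruct HJ as [[[[_ [_ [_ [_ [_ [_ [_ H]]]]]]] _] _] _]. apply H. Qed.
Lemma anti J (HJ : is_cone_with_joins J) (v w : J) : pw_le J v w -> pw_le J w v -> v = w.
Proof. destruct HJ as [[[_ [H _]] _] _]. apply H. Qed.
Lemma wsup J (HJ : is_cone_with_joins J) (v : J) :
  is_sup J (fun u => exists e, 0 <= e < 1 /\ u = e *w v) v.
Proof. destruct HJ as [[[_ [_ H]] _] _]. apply H. Qed.
Lemma dsup J (HJ : is_cone_with_joins J) D : directed J D -> exists x, is_sup J D x.
Proof. destruct HJ as [[_ H] _]. apply H. Qed.
Lemma infex J (HJ : is_cone_with_joins J) S : exists x, is_inf J S x.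
Proof. destruct HJ as [_ [H _]]. apply H. Qed.
Lemma trans_inf J (HJ : is_cone_with_joins J) v S x :
  is_inf J S x -> is_inf J (translate J v S) (v +w x).
Proof. destruct HJ as [_ [_ H]]. apply H. Qed.

Lemma le_refl J (HJ : is_cone_with_joins J) (a : J) : pw_le J a a.
Proof. exists (pw_zero J). apply (add0 J HJ); auto. Qed.
Lemma le_trans J (HJ : is_cone_with_joins J) (a b c : J) :
  pw_le J a b -> pw_le J b c -> pw_le J a c.
Proof. intros [z1 H1] [z2 H2]. exists (z1 +w z2). rewrite (addA J HJ), H1; auto. Qed.
Lemma le_addr J (HJ : is_cone_with_joins J) (a b : J) : pw_le J a (a +w b).
Proof. exists b. reflexivity. Qed.
Lemma le_addl J (HJ : is_cone_with_joins J) (a b : J) : pw_le J b (a +w b).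
Proof. exists a. apply (addC J HJ); auto. Qed.
Lemma le_add2r J (HJ : is_cone_with_joins J) (a b c : J) :
  pw_le J a b -> pw_le J (a +w c) (b +w c).
Proof. intros [z H]. exists z. rewrite <- H, <- !(addA J HJ), (addC J HJ c z). reflexivity. Qed.
Lemma le_add2l J (HJ : is_cone_with_joins J) (a b c : J) :
  pw_le J a b -> pw_le J (c +w a) (c +w b).
Proof. intros H. rewrite (addC J HJ c a), (addC J HJ c b). apply le_add2r; auto. Qed.
Lemma le_smul J (HJ : is_cone_with_joins J) l (a b : J) :
  0 <= l -> pw_le J a b -> pw_le J (l *w a) (l *w b).
Proof. intros Hl [z H]. exists (l *w z). rewrite <- H, (smDr J HJ); auto. Qed.
Lemma le_smul_scal J (HJ : is_cone_with_joins J) l m (v : J) :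
  0 <= l -> l <= m -> pw_le J (l *w v) (m *w v).
Proof. intros H1 H2. exists ((m - l) *w v). rewrite <- (smD J HJ); auto; try lra.
  replace (l + (m - l)) with m by ring. reflexivity. Qed.
Lemma sm_inv J (HJ : is_cone_with_joins J) l (v : J) : 0 < l -> (/ l) *w (l *w v) = v.
Proof. intros H. rewrite (smM J HJ); auto. rewrite Rinv_l. apply (sm1 J HJ); auto. lra.
  left; apply Rinv_0_lt_compat; auto. lra. Qed.
Lemma inf_spec J (HJ : is_cone_with_joins J) S : is_inf J S (inf J S).
Proof. unfold inf. apply epsilon_spec. apply infex; auto. Qed.
Lemma inf_unique J (HJ : is_cone_with_joins J) S x y : is_inf J S x -> is_inf J S y -> x = y.
Proof. intros [H1 H2] [H3 H4]. apply anti; auto. Qed.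

Lemma max_exists J (HJ : is_cone_with_joins J) (v w : J) : pw_le J v w ->
  exists p, is_max J (fun z => v +w z = w) p.
Proof.
  intros [z0 Hz0].
  set (S := fun z => v +w z = w).
  destruct (infex J HJ S) as [mu Hmu].
  assert (Hvmu : v +w mu = w).
  { apply (inf_unique J HJ (translate J v S)).
    - apply (trans_inf J HJ); exact Hmu.
    - split.
      + intros s [a [Ha ->]]. unfold S in Ha. rewrite Ha. apply le_refl; auto.
      + intros y Hy. rewrite <- Hz0. apply Hy. exists z0. split; [exact Hz0|reflexivity]. }
  set (T := fun a => w +w a = w).
  assert (HdT : directed J T).
  { split.
    - exists (pw_zero J). unfold T. apply (add0 J HJ); auto.
    - intros a b Ha Hb. exists (a +w b). split; [|split].
      + unfold T in *. rewrite (addA J HJ), Ha, Hb; auto.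
      + apply le_addr; auto.
      + apply le_addl; auto. }
  destruct (dsup J HJ T HdT) as [t [Htub Htl]].
  assert (Htt : t +w t = t).
  { assert (Hh : pw_le J t ((/2) *w t)).
    { apply Htl. intros a Ha.
      assert (H2 : T (2 *w a)).
      { unfold T in *. replace 2 with (1 + 1) by ring.
        rewrite (smD J HJ), (sm1 J HJ), (addA J HJ), Ha, Ha; auto; lra. }
      rewrite <- (sm_inv J HJ 2 a) by lra.
      apply le_smul; auto. left; apply Rinv_0_lt_compat; lra. }
    apply anti; auto.
    - replace (t +w t) with (2 *w t).
      + rewrite <- (sm_inv J HJ (/2) t) at 2 by (apply Rinv_0_lt_compat; lra).
        rewrite Rinv_inv. apply le_smul; auto; lra.
      + replace 2 with (1 + 1) by ring. rewrite (smD J HJ), (sm1 J HJ); auto; lra.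
    - apply le_addr; auto. }
  assert (Hwt : pw_le J t w).
  { apply Htl. intros a Ha. exists w. rewrite (addC J HJ); auto. }
  destruct Hwt as [c Hc].
  assert (Hwt : w +w t = w).
  { rewrite <- Hc. rewrite <- (addA J HJ), (addC J HJ c t), (addA J HJ), Htt; auto. }
  exists (mu +w t). split.
  - unfold S. rewrite (addA J HJ), Hvmu; auto.
  - intros z Hz. destruct Hmu as [Hml _]. destruct (Hml z Hz) as [a Ha].
    assert (HTa : T a).
    { unfold T. rewrite <- Hvmu at 1. rewrite <- (addA J HJ), Ha; auto. }
    rewrite <- Ha. apply le_add2l; auto.
Qed.

Lemma sub_spec J (HJ : is_cone_with_joins J) (v w : J) : pw_le J v w ->
  v +w pw_sub J w v = w /\ forall z, v +w z = w -> pw_le J z (pw_sub J w v).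
Proof.
  intros H.
  destruct (epsilon_spec (inhabits (pw_zero J)) (is_max J (fun z => v +w z = w))
     (max_exists J HJ v w H)) as [H1 H2].
  unfold pw_sub. split; [exact H1|]. intros z Hz. apply H2. exact Hz.
Qed.

Lemma h_absorb J (HJ : is_cone_with_joins J) (v : J) :
  v +w inf J (fun u => exists N : nat, (0 < N)%nat /\ u = (/ INR N) *w v) = v.
Proof.
  set (H := fun u => exists N : nat, (0 < N)%nat /\ u = (/ INR N) *w v).
  pose proof (inf_spec J HJ H) as [Hl _].
  set (h := inf J H) in *.
  apply anti; auto; [|apply le_addr; auto].
  destruct (wsup J HJ (v +w h)) as [_ Hs]. apply Hs.
  intros u [e [[He0 He1] ->]].
  destruct (archimed_cor1 (1 - e)) as [N [HN HN0]]; [lra|].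
  assert (HNp : 0 < / INR N) by (apply Rinv_0_lt_compat, lt_0_INR; auto).
  apply (le_trans J HJ) with (e *w ((1 + / INR N) *w v)); auto.
  - apply le_smul; auto. rewrite (smD J HJ), (sm1 J HJ); auto; try lra.
    apply le_add2l; auto. apply Hl. exists N; split; auto.
  - rewrite (smM J HJ); auto; try lra. rewrite <- (sm1 J HJ v) at 2.
    apply le_smul_scal; auto; nra.
Qed.

Lemma part2 J (HJ : is_cone_with_joins J) (v w vt wt : J) :
  pw_le J v w -> pw_le J (v +w vt) (w +w wt) -> pw_le J vt (wt +w pw_sub J w v).
Proof.
  intros Hvw Hle.
  destruct (sub_spec J HJ v w Hvw) as [Hp Hmax].
  set (p := pw_sub J w v) in *.
  set (y := wt +w p).
  assert (H0 : pw_le J (v +w vt) (v +w y)).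
  { unfold y. rewrite (addC J HJ wt p), (addA J HJ), Hp; auto. }
  assert (Hind : forall n, pw_le J (v +w INR n *w vt) (v +w INR n *w y)).
  { induction n.
    - simpl. rewrite !(sm0 J HJ); auto. apply le_refl; auto.
    - rewrite S_INR. rewrite !(smD J HJ), !(sm1 J HJ); auto; try lra; try apply pos_INR.
      set (a := INR n *w vt) in *. set (b := INR n *w y) in *.
      apply (le_trans J HJ) with ((v +w a) +w vt); [rewrite (addA J HJ); apply le_refl; auto|].
      apply (le_trans J HJ) with ((v +w b) +w vt); [apply le_add2r; auto|].
      replace ((v +w b) +w vt) with ((v +w vt) +w b)
        by (rewrite <- !(addA J HJ), (addC J HJ b vt); reflexivity).
      apply (le_trans J HJ) with ((v +w y) +w b); [apply le_add2r; auto|].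
      rewrite <- (addA J HJ), (addC J HJ y b); auto. apply le_refl; auto. }
  set (H := fun u => exists N : nat, (0 < N)%nat /\ u = (/ INR N) *w v).
  pose proof (trans_inf J HJ y H _ (inf_spec J HJ H)) as [_ Hg].
  assert (Hvth : pw_le J vt (y +w inf J H)).
  { apply Hg. intros s [a [[N [HN ->]] ->]].
    assert (HNp : 0 < INR N) by (apply lt_0_INR; auto).
    assert (HNi : 0 <= / INR N) by (left; apply Rinv_0_lt_compat; auto).
    pose proof (le_smul J HJ (/ INR N) _ _ HNi (Hind N)) as HS.
    rewrite !(smDr J HJ), !(sm_inv J HJ) in HS; auto.
    rewrite (addC J HJ); auto.
    apply (le_trans J HJ) with (/ INR N *w v +w vt); auto. apply le_addl; auto. }
  pose proof (h_absorb J HJ v) as Hab. fold H in Hab.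
  set (h := inf J H) in *.
  assert (Hph : pw_le J (p +w h) p).
  { apply Hmax. rewrite (addA J HJ), (addC J HJ v p), <- (addA J HJ), Hab, (addC J HJ); auto. }
  apply (le_trans J HJ) with (y +w h); auto.
  unfold y. rewrite <- (addA J HJ). apply le_add2l; auto.
Qed.

Theorem mainTheorem12 (J : PW) (HJ : is_cone_with_joins J)
  (A At : (J * J)%type -> Prop)
  (HA : forall v w : J, A (v, w) -> pw_le J v w)
  (HAt : forall v w vt wt : J, A (v, w) -> At (vt, wt) ->
           pw_le J (pw_add J v vt) (pw_add J w wt)) :
  let x := inf J (fun z => exists v w : J, A (v, w) /\ z = pw_sub J w v) in
  (forall v w : J, A (v, w) -> pw_le J (pw_add J v x) w) /\
  (forall vt wt : J, At (vt, wt) -> pw_le J vt (pw_add J wt x)).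
Proof.
  cbv zeta.
  set (X := fun z => exists v w : J, A (v, w) /\ z = pw_sub J w v).
  pose proof (inf_spec J HJ X) as Hx.
  set (x := inf J X) in *.
  split.
  - intros v w Hvw. destruct (sub_spec J HJ v w (HA v w Hvw)) as [Hp _].
    apply (le_trans J HJ) with (v +w pw_sub J w v); auto.
    + apply le_add2l; auto. apply (proj1 Hx). exists v, w; split; auto.
    + rewrite Hp. apply le_refl; auto.
  - intros vt wt Hat. apply (proj2 (trans_inf J HJ wt X x Hx)).
    intros s [a [[v [w [Hvw ->]]] ->]]. apply part2; auto.
Qed.
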